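(* Let $d\ge 2$ and $N\ge 1$ be integers and consider the infinite-temperature limit $\beta=0$, so that the thermal distribution of the system is uniform and the joint thermal distribution $\Gamma$ of system and memory is uniform on $\{1,\dots,dN\}$. Let $\mathbf p=(p_1,\dots,p_d)$ be a probability vector, let $i\neq j$ be two levels of the system, and let $\mathcal P^{(ij)}$ be the memory-assisted protocol defined in the context. Then $$\mathcal P^{(ij)}(\mathbf p\otimes\boldsymbol\eta_M)=\mathbf q\otimes\boldsymbol\eta_M,\qquad \mathbf q=\big(\Pi_{ij}+\epsilon(\mathbb 1-\Pi_{ij})\big)\mathbf p,$$ where $\Pi_{ij}$ is the $d\times d$ permutation matrix transposing entries $i$ and $j$, $\mathbb 1$ is the identity, and $\epsilon$ (which depends only on $N$) satisfies $$\epsilon=(\pi N)^{-1/2}+o\big(N^{-1/2}\big)\xrightarrow{N\to\infty}0 .$$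
   Context: Setting: a $d$-level system with energies $E_1,\dots,E_d$ and thermal (Gibbs) distribution $\gamma_a=e^{-\beta E_a}/\sum_b e^{-\beta E_b}$; an $N$-dimensional memory with trivial Hamiltonian, whose thermal state is the uniform distribution $\boldsymbol\eta_M=(1/N,\dots,1/N)$. Joint (energy-incoherent) states are probability vectors $\mathbf Q$ of length $dN$, where the entry with index $(a-1)N+k$ corresponds to system level $a\in\{1,\dots,d\}$ and memory level $k\in\{1,\dots,N\}$; $\mathbf p\otimes\boldsymbol\eta_M$ has entries $p_a/N$ and the joint thermal distribution is $\Gamma=\boldsymbol\gamma\otimes\boldsymbol\eta_M$, i.e. $\Gamma_{(a-1)N+k}=\gamma_a/N$. Two-level thermalisation $T_{xy}$ ($x\neq y$ joint indices): it maps $Q_x\mapsto (Q_x+Q_y)\Gamma_x/(\Gamma_x+\Gamma_y)$, $Q_y\mapsto (Q_x+Q_y)\Gamma_y/(\Gamma_x+\Gamma_y)$ and leaves all other entries unchanged. Round $\mathcal R^{(ij)}_k$ ($k=1,\dots,N$): apply sequentially, for $l=1,2,\dots,N$ in this order, the thermalisations $T_{(j-1)N+k,\,(i-1)N+l}$ (i.e. the $k$-th entry of the block of level $j$ is thermalised successively with every entry of the block of level $i$). Truncated protocol: $\widetilde{\mathcal P}^{(ij)}=\mathcal R^{(ij)}_N\circ\cdots\circ\mathcal R^{(ij)}_1$. Full thermalisation of the memory: $\mathcal T(\mathbf Q)=\mathbf q\otimes\boldsymbol\eta_M$ with $q_a=\sum_{k=1}^N Q_{(a-1)N+k}$. Protocol: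 $\mathcal P^{(ij)}=\mathcal T\circ\widetilde{\mathcal P}^{(ij)}$. *)

(* Defs.v *)
(* Distributions are functions nat -> R,
   only the entries with index < length are meaningful; indices are 0-based:
   system level a in {0..d-1}, memory level k in {0..N-1},
   joint index a*N + k  (paper: (a-1)N+k with 1-based a,k). *)
From Stdlib Require Import Reals Lra Lia List.
Open Scope R_scope.

Fixpoint rsum (n : nat) (f : nat -> R) : R :=
  match n with
  | O => 0
  | S m => rsum m f + f m
  end.

Definition gibbs (beta : R) (E : nat -> R) (d : nat) (a : nat) : R :=
  exp (- beta * E a) / rsum d (fun b => exp (- beta * E b)).

Definition Gamma (beta : R) (E : nat -> R) (d N : nat) (z : nat) : R :=
  gibbs beta E d (Nat.div z N) / INR N.

Definition tensor_eta (N : nat) (p : nat -> R) (z : nat) : R :=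
  p (Nat.div z N) / INR N.

Definition therm2 (G : nat -> R) (x y : nat) (Q : nat -> R) : nat -> R :=
  fun z =>
    if Nat.eqb z x then (Q x + Q y) * G x / (G x + G y)
    else if Nat.eqb z y then (Q x + Q y) * G y / (G x + G y)
    else Q z.

Definition round (G : nat -> R) (N i j k : nat) (Q : nat -> R) : nat -> R :=
  fold_left (fun Q' l => therm2 G (j * N + k)%nat (i * N + l)%nat Q') (seq 0 N) Q.

Definition trunc_protocol (G : nat -> R) (N i j : nat) (Q : nat -> R) : nat -> R :=
  fold_left (fun Q' k => round G N i j k Q') (seq 0 N) Q.

Definition therm_memory (N : nat) (Q : nat -> R) : nat -> R :=
  tensor_eta N (fun a => rsum N (fun k => Q (a * N + k)%nat)).

Definition protocol (beta : R) (E : nat -> R) (d N i j : nat) (Q : nat -> R) : nat -> R :=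
  therm_memory N (trunc_protocol (Gamma beta E d N) N i j Q).

Definition swap (i j a : nat) : nat :=
  if Nat.eqb a i then j else if Nat.eqb a j then i else a.

Definition Pi_mx (i j a b : nat) : R := if Nat.eqb b (swap i j a) then 1 else 0.
Definition id_mx (a b : nat) : R := if Nat.eqb a b then 1 else 0.

Definition qvec (d i j : nat) (eps : R) (p : nat -> R) (a : nat) : R :=
  rsum d (fun b => (Pi_mx i j a b + eps * (id_mx a b - Pi_mx i j a b)) * p b).

Definition prob_vec (d : nat) (p : nat -> R) : Prop :=
  (forall a, (a < d)%nat -> 0 <= p a) /\ rsum d p = 1.

(* Main.v *)
Require Import Defs.
From Stdlib Require Import Reals Lra Lia List Arith Factorial ZArith.
From Coquelicot Require Import Coquelicot.
Open Scope R_scope.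

Definition D (a b : nat) : R :=
  INR (fact (a + b)) / (INR (fact a) * INR (fact b) * 2 ^ (a + b)).

Lemma fact_pos n : 0 < INR (fact n).
Proof. apply lt_0_INR, lt_O_fact. Qed.

Lemma D_pos a b : 0 < D a b.
Proof.
  unfold D. pose proof (fact_pos (a+b)). pose proof (fact_pos a). pose proof (fact_pos b).
  pose proof (pow_lt 2 (a+b)).
  apply Rdiv_lt_0_compat; auto. apply Rmult_lt_0_compat; [apply Rmult_lt_0_compat|]; auto; lra.
Qed.

Lemma D_sym a b : D a b = D b a.
Proof. unfold D. rewrite Nat.add_comm. f_equal. ring. Qed.

Lemma D00 : D 0 0 = 1.
Proof. unfold D. simpl. field. Qed.

Lemma D_a0 a : D (S a) 0 = D a 0 / 2.
Proof.
  unfold D. rewrite !Nat.add_0_r. rewrite fact_simpl. rewrite mult_INR. simpl pow.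
  pose proof (fact_pos a). pose proof (pow_lt 2 a). rewrite S_INR. pose proof (pos_INR a).
  pose proof (fact_pos 0). field. repeat split; lra.
Qed.

Lemma D_0b b : D 0 (S b) = D 0 b / 2.
Proof. rewrite D_sym, D_a0, D_sym. reflexivity. Qed.

Lemma D_rec a b : D (S a) (S b) = (D a (S b) + D (S a) b) / 2.
Proof.
  unfold D.
  replace (S a + S b)%nat with (S (S (a + b))) by lia.
  replace (a + S b)%nat with (S (a + b)) by lia.
  replace (S a + b)%nat with (S (a + b)) by lia.
  rewrite !fact_simpl. rewrite !mult_INR. simpl pow.
  pose proof (fact_pos a). pose proof (fact_pos b). pose proof (fact_pos (a+b)).
  pose proof (pow_lt 2 (a+b)).
  rewrite !S_INR, plus_INR.
  pose proof (pos_INR a). pose proof (pos_INR b).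
  field. repeat split; lra.
Qed.

Lemma D_diag n : D (S n) (S n) = D n n * (2 * INR n + 1) / (2 * INR n + 2).
Proof.
  unfold D.
  replace (S n + S n)%nat with (S (S (n + n))) by lia.
  rewrite !fact_simpl. rewrite !mult_INR. simpl pow.
  pose proof (fact_pos n). pose proof (fact_pos (n+n)).
  pose proof (pow_lt 2 (n+n)).
  rewrite !S_INR, plus_INR.
  pose proof (pos_INR n).
  field. repeat split; lra.
Qed.

Fixpoint H (k : nat) : nat -> R :=
  match k with
  | O => fun _ => 0
  | S k' => fix Hk (l : nat) : R :=
      match l with
      | O => 1
      | S l' => (H k' (S l') + Hk l') / 2
      end
  end.

Lemma H_0l l : H 0 l = 0. Proof. reflexivity. Qed.
Lemma H_k0 k : H (S k) 0 = 1. Proof. reflexivity. Qed.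
Lemma H_rec k l : H (S k) (S l) = (H k (S l) + H (S k) l) / 2. Proof. reflexivity. Qed.

Lemma H_sym_aux n : forall k l, (k + l = S n)%nat -> H k l + H l k = 1.
Proof.
  induction n as [|n IH]; intros k l Hkl.
  - destruct k as [|[|k]]; destruct l as [|[|l]]; try lia; simpl; lra.
  - destruct k as [|k]; destruct l as [|l].
    + lia.
    + rewrite H_0l, H_k0. ring.
    + rewrite H_0l, H_k0. ring.
    + rewrite !H_rec.
      assert (A1 : H k (S l) + H (S l) k = 1) by (apply IH; lia).
      assert (A2 : H (S k) l + H l (S k) = 1) by (apply IH; lia).
      lra.
Qed.

Lemma H_sym k l : (0 < k + l)%nat -> H k l + H l k = 1.
Proof. intros. destruct (k + l)%nat eqn:E. lia. apply (H_sym_aux n). auto. Qed.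

Lemma H_diag n : H (S n) (S n) = 1/2.
Proof. pose proof (H_sym (S n) (S n)). assert (H (S n) (S n) + H (S n) (S n) = 1) by (apply H0; lia). lra. Qed.

Lemma H_1l l : H 1 l = D 0 l.
Proof.
  induction l as [|l IH].
  - rewrite D00. reflexivity.
  - rewrite H_rec, H_0l, IH, D_0b. lra.
Qed.

Lemma H_diff k : forall l, H (S k) l - H (S k) (S l) = D k l / 2.
Proof.
  induction k as [|k IHk]; intros l.
  - rewrite !H_1l, D_0b. lra.
  - induction l as [|l IHl].
    + rewrite H_rec, !H_k0, D_a0. specialize (IHk 0%nat). rewrite H_k0 in IHk. lra.
    + rewrite (H_rec (S k) (S l)), (H_rec (S k) l) at 1.
      rewrite D_rec. specialize (IHk (S l)). lra.
Qed.

Lemma rsum_S n f : rsum (S n) f = rsum n f + f n.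
Proof. reflexivity. Qed.

Lemma rsum_ext n f g : (forall m, (m < n)%nat -> f m = g m) -> rsum n f = rsum n g.
Proof.
  induction n; intros Hfg; simpl. reflexivity.
  rewrite IHn, Hfg; auto.
Qed.

Lemma rsum_plus n f g : rsum n (fun m => f m + g m) = rsum n f + rsum n g.
Proof. induction n; simpl. ring. rewrite IHn. ring. Qed.

Lemma rsum_minus n f g : rsum n (fun m => f m - g m) = rsum n f - rsum n g.
Proof. induction n; simpl. ring. rewrite IHn. ring. Qed.

Lemma rsum_scal n c f : rsum n (fun m => c * f m) = c * rsum n f.
Proof. induction n; simpl. ring. rewrite IHn. ring. Qed.

Lemma rsum_const n c : rsum n (fun _ => c) = INR n * c.
Proof. induction n; simpl rsum. simpl; ring. rewrite IHn, S_INR. ring. Qed.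

Lemma tele k L : rsum L (fun l => D k l / 2) = 1 - H (S k) L.
Proof.
  induction L; simpl rsum. rewrite H_k0. ring.
  rewrite IHL. pose proof (H_diff k L). lra.
Qed.

Lemma sumD N : rsum N (fun m => D m N) = 1 - D N N.
Proof.
  rewrite (rsum_ext N _ (fun m => 2 * (D N m / 2))).
  2:{ intros. rewrite D_sym. field. }
  rewrite rsum_scal, tele.
  pose proof (H_diff N N). rewrite H_diag in H0. lra.
Qed.

Lemma E_val N : rsum N (fun m => H (S m) N) = INR N * D N N.
Proof.
  induction N as [|N IH].
  - simpl. ring.
  - rewrite rsum_S. rewrite H_diag.
    rewrite (rsum_ext N _ (fun m => H (S m) N - D m N / 2)).
    2:{ intros. pose proof (H_diff m N). lra. }
    rewrite rsum_minus, IH.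
    rewrite (rsum_ext N (fun m => D m N / 2) (fun m => / 2 * D m N)) by (intros; field).
    rewrite rsum_scal, sumD, D_diag, S_INR.
    pose proof (pos_INR N). field. lra.
Qed.

Lemma Ei_val N : rsum N (fun l => H N (S l)) = INR N - INR N * D N N.
Proof.
  rewrite (rsum_ext N _ (fun l => 1 - H (S l) N)).
  2:{ intros. pose proof (H_sym N (S m)). assert (0 < N + S m)%nat by lia. specialize (H1 H2). lra. }
  rewrite rsum_minus, E_val, rsum_const. ring.
Qed.

Lemma divmod_ab N a r : (r < N)%nat -> ((a * N + r) / N = a /\ (a * N + r) mod N = r)%nat.
Proof.
  intros Hr. split.
  - symmetry. apply (Nat.div_unique _ _ _ r); [exact Hr| lia].
  - symmetry. apply (Nat.mod_unique _ _ a); [exact Hr| lia].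
Qed.

Lemma decomp N z : (0 < N)%nat -> z = ((z / N) * N + z mod N)%nat /\ (z mod N < N)%nat.
Proof.
  intros. split. pose proof (Nat.div_mod_eq z N). lia. apply Nat.mod_upper_bound. lia.
Qed.

Lemma gibbs0 E d a : (1 <= d)%nat -> gibbs 0 E d a = / INR d.
Proof.
  intros. unfold gibbs. assert (Z : forall x : R, - 0 * x = 0) by (intros; ring). rewrite Z, exp_0.
  rewrite (rsum_ext d _ (fun _ => 1)).
  2:{ intros. rewrite Z, exp_0. reflexivity. }
  rewrite rsum_const. field. apply not_0_INR. lia.
Qed.

Lemma therm2_unif G c x y Q z : (forall w, G w = c) -> c <> 0 ->
  therm2 G x y Q z = if Nat.eqb z x then (Q x + Q y) / 2 else if Nat.eqb z y then (Q x + Q y) / 2 else Q z.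
Proof.
  intros HG Hc. unfold therm2. rewrite !HG.
  destruct (Nat.eqb z x); [field; lra|].
  destruct (Nat.eqb z y); [field; lra|reflexivity].
Qed.


Definition vl (N i j : nat) (p : nat -> R) (h : R) : R := (p i + (p j - p i) * h) / INR N.

Definition St (N i j : nat) (p : nat -> R) (k L z : nat) : R :=
  let a := (z / N)%nat in let r := (z mod N)%nat in
  if Nat.eqb a i then (if Nat.ltb r L then vl N i j p (H (S k) (S r)) else vl N i j p (H k (S r)))
  else if Nat.eqb a j then
    (if Nat.ltb r k then vl N i j p (H (S r) N) else if Nat.eqb r k then vl N i j p (H (S k) L) else p j / INR N)
  else p a / INR N.


Lemma vl1 (N i j : nat) (p : nat -> R) : vl N i j p 1 = p j / INR N.
Proof. unfold vl. f_equal. ring. Qed.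

Lemma St_at (N i j : nat) (p : nat -> R) k L a r : (r < N)%nat -> St N i j p k L (a * N + r) =
  if Nat.eqb a i then (if Nat.ltb r L then vl N i j p (H (S k) (S r)) else vl N i j p (H k (S r)))
  else if Nat.eqb a j then
    (if Nat.ltb r k then vl N i j p (H (S r) N) else if Nat.eqb r k then vl N i j p (H (S k) L) else p j / INR N)
  else p a / INR N.
Proof. intros Hr. unfold St. destruct (divmod_ab N a r Hr) as [-> ->]. reflexivity. Qed.

Lemma St_init (N i j : nat) (p : nat -> R) (HN : (0 < N)%nat) z : St N i j p 0 0 z = tensor_eta N p z.
Proof.
  destruct (decomp N z HN) as [Ez Hr]. rewrite Ez. unfold tensor_eta.
  rewrite St_at by exact Hr. destruct (divmod_ab N (z / N) (z mod N) Hr) as [-> _].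
  set (a := (z / N)%nat). set (r := (z mod N)%nat).
  destruct (Nat.eqb_spec a i).
  - simpl. subst a. rewrite e. unfold vl. f_equal. ring.
  - destruct (Nat.eqb_spec a j).
    + rewrite e. destruct r; simpl. apply vl1. reflexivity.
    + reflexivity.
Qed.

Lemma St_next (N i j : nat) (p : nat -> R) (HN : (0 < N)%nat) k z : St N i j p k N z = St N i j p (S k) 0 z.
Proof.
  destruct (decomp N z HN) as [Ez Hr]. rewrite Ez.
  rewrite !St_at by exact Hr.
  set (a := (z / N)%nat). set (r := (z mod N)%nat). fold r in Hr.
  destruct (Nat.eqb_spec a i). 
  - replace (Nat.ltb r N) with true by (symmetry; apply Nat.ltb_lt; auto).
    replace (Nat.ltb r 0) with false by (symmetry; apply Nat.ltb_ge; lia). reflexivity.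
  - destruct (Nat.eqb_spec a j); [|reflexivity].
    destruct (Nat.ltb_spec r k); destruct (Nat.ltb_spec r (S k)); try lia.
    + reflexivity.
    + replace r with k by lia. rewrite Nat.eqb_refl. reflexivity.
    + destruct (Nat.eqb_spec r k); try lia. destruct (Nat.eqb_spec r (S k)).
      * rewrite H_k0, vl1. reflexivity.
      * reflexivity.
Qed.

Lemma St_step (N i j : nat) (p : nat -> R) (HN : (0 < N)%nat) (Hij : i <> j) G c k L Q : (forall w, G w = c) -> c <> 0 -> (k < N)%nat -> (L < N)%nat ->
  (forall z, Q z = St N i j p k L z) ->
  forall z, therm2 G (j * N + k)%nat (i * N + L)%nat Q z = St N i j p k (S L) z.
Proof.
  intros HG Hc Hk HL HQ z.
  rewrite (therm2_unif G c) by auto.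
  assert (Qx : Q (j * N + k)%nat = vl N i j p (H (S k) L)).
  { rewrite HQ, St_at by auto. destruct (Nat.eqb_spec j i); try congruence.
    rewrite Nat.eqb_refl. destruct (Nat.ltb_spec k k); try lia. rewrite Nat.eqb_refl. reflexivity. }
  assert (Qy : Q (i * N + L)%nat = vl N i j p (H k (S L))).
  { rewrite HQ, St_at by auto. rewrite Nat.eqb_refl. destruct (Nat.ltb_spec L L); try lia. reflexivity. }
  assert (Avg : (Q (j * N + k)%nat + Q (i * N + L)%nat) / 2 = vl N i j p (H (S k) (S L))).
  { rewrite Qx, Qy, H_rec. unfold vl. field. apply not_0_INR. lia. }
  rewrite Avg.
  destruct (decomp N z HN) as [Ez Hr].
  set (a := (z / N)%nat) in *. set (r := (z mod N)%nat) in *.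
  destruct (Nat.eqb_spec z (j * N + k)) as [Ex|Ex].
  - rewrite Ex, St_at by auto. destruct (Nat.eqb_spec j i); try congruence.
    rewrite Nat.eqb_refl. destruct (Nat.ltb_spec k k); try lia. rewrite Nat.eqb_refl. reflexivity.
  - destruct (Nat.eqb_spec z (i * N + L)) as [Ey|Ey].
    + rewrite Ey, St_at by auto. rewrite Nat.eqb_refl. destruct (Nat.ltb_spec L (S L)); try lia. reflexivity.
    + rewrite HQ. rewrite Ez, !St_at by auto.
      destruct (Nat.eqb_spec a i).
      * assert (r <> L) by (intro Hr'; apply Ey; rewrite Ez, e, Hr'; reflexivity).
        destruct (Nat.ltb_spec r L); destruct (Nat.ltb_spec r (S L)); try lia; reflexivity.
      * destruct (Nat.eqb_spec a j); [|reflexivity].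
        assert (r <> k) by (intro Hr'; apply Ex; rewrite Ez, e, Hr'; reflexivity).
        destruct (Nat.ltb_spec r k); [reflexivity|].
        destruct (Nat.eqb_spec r k); try lia. reflexivity.
Qed.



Lemma round_ok G c N i j p k Q : (0 < N)%nat -> i <> j -> (forall w, G w = c) -> c <> 0 -> (k < N)%nat ->
  (forall z, Q z = St N i j p k 0 z) -> forall z, round G N i j k Q z = St N i j p (S k) 0 z.
Proof.
  intros HN Hij HG Hc Hk HQ.
  assert (AUX : forall m L Q', (L + m = N)%nat -> (forall z, Q' z = St N i j p k L z) ->
     forall z, fold_left (fun Q'' l => therm2 G (j * N + k)%nat (i * N + l)%nat Q'') (seq L m) Q' z = St N i j p k N z).
  { induction m as [|m IH]; intros L Q' HL HQ' z.
    - simpl. rewrite HQ'. replace L with N by lia. reflexivity.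
    - simpl. apply IH. lia. intros z'. apply (St_step N i j p HN Hij G c); auto. lia. }
  intros z. unfold round. rewrite (AUX N 0%nat Q); auto. apply St_next; auto.
Qed.

Lemma trunc_ok G c N i j p Q : (0 < N)%nat -> i <> j -> (forall w, G w = c) -> c <> 0 ->
  (forall z, Q z = St N i j p 0 0 z) -> forall z, trunc_protocol G N i j Q z = St N i j p N 0 z.
Proof.
  intros HN Hij HG Hc HQ.
  assert (AUX : forall m k Q', (k + m = N)%nat -> (forall z, Q' z = St N i j p k 0 z) ->
     forall z, fold_left (fun Q'' k => round G N i j k Q'') (seq k m) Q' z = St N i j p N 0 z).
  { induction m as [|m IH]; intros k Q' Hk HQ' z.
    - simpl. rewrite HQ'. replace k with N by lia. reflexivity.
    - simpl. apply IH. lia. intros z'. apply (round_ok G c); auto. lia. }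
  intros z. unfold trunc_protocol. apply (AUX N 0%nat Q); auto.
Qed.

Lemma rsum_delta n c f : (c < n)%nat -> rsum n (fun b => (if Nat.eqb b c then 1 else 0) * f b) = f c.
Proof.
  induction n; intros Hc. lia.
  rewrite rsum_S. destruct (Nat.eqb_spec n c).
  - subst. rewrite (rsum_ext c _ (fun _ => 0)).
    + rewrite rsum_const. ring.
    + intros m Hm. destruct (Nat.eqb_spec m c); try lia. ring.
  - rewrite IHn by lia. ring.
Qed.

Lemma qvec_val d i j e p a : (a < d)%nat -> (i < d)%nat -> (j < d)%nat ->
  qvec d i j e p a = p (swap i j a) + e * (p a - p (swap i j a)).
Proof.
  intros Ha Hi Hj. unfold qvec.
  rewrite (rsum_ext d _ (fun b => (Pi_mx i j a b * p b) + e * ((id_mx a b * p b) - (Pi_mx i j a b * p b)))) by (intros; ring).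
  rewrite rsum_plus, rsum_scal, rsum_minus.
  assert (Hs : (swap i j a < d)%nat).
  { unfold swap. destruct (Nat.eqb a i); auto. destruct (Nat.eqb a j); auto. }
  assert (E1 : rsum d (fun b => Pi_mx i j a b * p b) = p (swap i j a)).
  { unfold Pi_mx. apply rsum_delta; auto. }
  assert (E2 : rsum d (fun b => id_mx a b * p b) = p a).
  { unfold id_mx. rewrite (rsum_ext d _ (fun b => (if Nat.eqb b a then 1 else 0) * p b)).
    apply rsum_delta; auto. intros. rewrite Nat.eqb_sym. reflexivity. }
  rewrite E1, E2. ring.
Qed.

Lemma te_at N f a k : (k < N)%nat -> tensor_eta N f (a * N + k) = f a / INR N.
Proof. intros Hk. unfold tensor_eta. destruct (divmod_ab N a k Hk) as [-> _]. reflexivity. Qed.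

Lemma rsum_vl N i j p g : rsum N (fun r => vl N i j p (g r)) = (INR N * p i + (p j - p i) * rsum N g) / INR N.
Proof.
  unfold vl. rewrite (rsum_ext N _ (fun r => (p i / INR N) + ((p j - p i) / INR N) * g r)).
  2:{ intros. unfold Rdiv. ring. }
  rewrite rsum_plus, rsum_scal, rsum_const. unfold Rdiv. ring.
Qed.

Lemma part1 (E : nat -> R) (d N : nat) (p : nat -> R) (i j : nat) :
       (2 <= d)%nat -> (1 <= N)%nat ->
       (i < d)%nat -> (j < d)%nat -> i <> j ->
       forall a k, (a < d)%nat -> (k < N)%nat ->
         protocol 0 E d N i j (tensor_eta N p) (a * N + k)%nat
         = tensor_eta N (qvec d i j (D N N) p) (a * N + k)%nat.
Proof.
  intros Hd HN Hi Hj Hij a k Ha Hk.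
  assert (HN' : (0 < N)%nat) by lia.
  assert (INz : INR N <> 0) by (apply not_0_INR; lia).
  assert (IDz : INR d <> 0) by (apply not_0_INR; lia).
  unfold protocol, therm_memory. rewrite !te_at by auto.
  apply (f_equal (fun x => x / INR N)).
  set (c := / INR d / INR N).
  assert (HG : forall w, Gamma 0 E d N w = c).
  { intros w. unfold Gamma, c. rewrite gibbs0 by lia. reflexivity. }
  assert (Hc : c <> 0).
  { unfold c. unfold Rdiv. apply Rmult_integral_contrapositive. split; apply Rinv_neq_0_compat; auto. }
  rewrite (rsum_ext N _ (fun r => St N i j p N 0 (a * N + r))).
  2:{ intros r Hr. apply (trunc_ok _ c); auto. intros z. symmetry. apply St_init; auto. }
  rewrite (rsum_ext N _ (fun r => if Nat.eqb a i then vl N i j p (H N (S r))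
                                  else if Nat.eqb a j then vl N i j p (H (S r) N) else p a / INR N)).
  2:{ intros r Hr. rewrite St_at by auto. destruct (Nat.eqb a i).
      - destruct (Nat.ltb_spec r 0); try lia. reflexivity.
      - destruct (Nat.eqb a j); auto. destruct (Nat.ltb_spec r N); try lia. reflexivity. }
  rewrite qvec_val by auto.
  destruct (Nat.eqb_spec a i) as [ei|ei].
  - subst a. rewrite rsum_vl, Ei_val. unfold swap. rewrite Nat.eqb_refl. field. auto.
  - destruct (Nat.eqb_spec a j) as [ej|ej].
    + subst a. rewrite rsum_vl, E_val. unfold swap.
      destruct (Nat.eqb_spec j i); try congruence. rewrite Nat.eqb_refl. field. auto.
    + rewrite rsum_const. unfold swap.
      destruct (Nat.eqb_spec a i); try congruence. destruct (Nat.eqb_spec a j); try congruence.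
      field. auto.
Qed.

Definition Iw (n : nat) : R := RInt (fun x => sin x ^ n) 0 (PI/2).

Lemma sinpow_cont n x : continuous (fun x => sin x ^ n) x.
Proof. apply (ex_derive_continuous (K:=R_AbsRing) (V:=R_NormedModule)). auto_derive. auto. Qed.

Lemma sinpow_ex n : ex_RInt (fun x => sin x ^ n) 0 (PI/2).
Proof. apply (ex_RInt_continuous (V:=R_CompleteNormedModule)). intros; apply sinpow_cont. Qed.

Lemma Iw0 : Iw 0 = PI/2.
Proof. unfold Iw. simpl. rewrite RInt_const. unfold scal; simpl. unfold mult; simpl. lra. Qed.

Lemma Iw1 : Iw 1 = 1.
Proof.
  unfold Iw. apply (is_RInt_unique (V:=R_CompleteNormedModule)).
  replace 1 with (minus ((fun x => - cos x) (PI/2)) ((fun x => - cos x) 0)).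
  2:{ simpl. rewrite cos_PI2, cos_0. unfold minus, plus, opp; simpl. lra. }
  apply (is_RInt_derive (V:=R_CompleteNormedModule) (fun x => - cos x)).
  - intros x _. auto_derive. auto. ring.
  - intros x _. apply sinpow_cont.
Qed.

Lemma Iw_rec n : INR (S (S n)) * Iw (S (S n)) = INR (S n) * Iw n.
Proof.
  assert (H : is_RInt (fun x => INR (S n) * sin x ^ n - INR (S (S n)) * sin x ^ (S (S n))) 0 (PI/2) 0).
  { assert (E0 : minus ((fun x => cos x * sin x ^ (S n)) (PI/2)) ((fun x => cos x * sin x ^ (S n)) 0) = 0).
    { simpl. rewrite cos_PI2, sin_0. unfold minus, plus, opp; simpl. ring. }
    rewrite <- E0 at 2.
    apply (is_RInt_derive (V:=R_CompleteNormedModule) (fun x => cos x * sin x ^ (S n))).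
    - intros x _. auto_derive. auto.
      assert (Hc: cos x * cos x = 1 - sin x * sin x) by (pose proof (sin2_cos2 x); unfold Rsqr in *; lra).
      change (match n with 0%nat => 1 | S _ => INR n + 1 end) with (INR (S n)). rewrite !S_INR. cbn [pow].
      set (s := sin x) in *. set (c := cos x) in *. set (t := s ^ n) in *.
      replace (c * (1 * c * ((INR n + 1) * t))) with ((INR n+1)*t*(c*c)) by ring.
      rewrite Hc. ring.
    - intros x _. apply (ex_derive_continuous (K:=R_AbsRing) (V:=R_NormedModule)). auto_derive. auto. }
  pose proof (is_RInt_minus _ _ _ _ _ _ (is_RInt_scal _ _ _ (INR (S n)) _ (RInt_correct (V:=R_CompleteNormedModule) _ _ _ (sinpow_ex n)))
     (is_RInt_scal _ _ _ (INR (S (S n))) _ (RInt_correct (V:=R_CompleteNormedModule) _ _ _ (sinpow_ex (S (S n)))))) as H2.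
  pose proof (is_RInt_unique (V:=R_CompleteNormedModule) _ _ _ _ H) as E1.
  pose proof (is_RInt_unique (V:=R_CompleteNormedModule) _ _ _ _ H2) as E2.
  change (RInt (fun x => INR (S n) * sin x ^ n - INR (S (S n)) * sin x ^ S (S n)) 0 (PI/2) = INR (S n) * Iw n - INR (S (S n)) * Iw (S (S n))) in E2.
  rewrite E1 in E2. lra.
Qed.

Lemma Iw_dec n : Iw (S n) <= Iw n.
Proof.
  unfold Iw. apply RInt_le. pose proof PI_RGT_0; lra. apply sinpow_ex. apply sinpow_ex.
  intros x Hx. pose proof PI_RGT_0.
  assert (0 <= sin x) by (apply sin_ge_0; lra).
  pose proof (SIN_bound x).
  simpl. assert (0 <= sin x ^ n) by (apply pow_le; lra).
  nra.
Qed.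

Lemma INR2 n : INR (2 * n) = 2 * INR n.
Proof. rewrite mult_INR. simpl. ring. Qed.

Lemma Iw_even n : Iw (2 * n) = PI / 2 * D n n.
Proof.
  induction n as [|n IH].
  - simpl. rewrite Iw0, D00. ring.
  - replace (2 * S n)%nat with (S (S (2 * n))) by lia.
    pose proof (pos_INR n).
    assert (R' : (2 * INR n + 2) * Iw (S (S (2 * n))) = (2 * INR n + 1) * Iw (2 * n)).
    { replace (2 * INR n + 2) with (INR (S (S (2 * n)))) by (rewrite !S_INR, INR2; ring).
      replace (2 * INR n + 1) with (INR (S (2 * n))) by (rewrite !S_INR, INR2; ring).
      apply Iw_rec. }
    rewrite D_diag.
    apply (Rmult_eq_reg_l (2 * INR n + 2)). 2: lra.
    rewrite R', IH. field. lra.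
Qed.

Lemma Iw_odd n : INR (2 * n + 1) * D n n * Iw (2 * n + 1) = 1.
Proof.
  induction n as [|n IH].
  - simpl. rewrite D00. rewrite Iw1. ring.
  - replace (2 * S n + 1)%nat with (S (S (2 * n + 1))) by lia.
    pose proof (pos_INR n).
    assert (R' : (2 * INR n + 3) * Iw (S (S (2 * n + 1))) = (2 * INR n + 2) * Iw (2 * n + 1)).
    { replace (2 * INR n + 3) with (INR (S (S (2 * n + 1)))) by (rewrite !S_INR, plus_INR, INR2; simpl; ring).
      replace (2 * INR n + 2) with (INR (S (2 * n + 1))) by (rewrite !S_INR, plus_INR, INR2; simpl; ring).
      apply Iw_rec. }
    replace (INR (S (S (2 * n + 1)))) with (2 * INR n + 3) by (rewrite !S_INR, plus_INR, INR2; simpl; ring).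
    rewrite plus_INR, INR2 in IH. simpl INR in IH.
    rewrite D_diag.
    replace ((2 * INR n + 3) * (D n n * (2 * INR n + 1) / (2 * INR n + 2)) * Iw (S (S (2 * n + 1))))
      with ((D n n * (2 * INR n + 1) / (2 * INR n + 2)) * ((2 * INR n + 3) * Iw (S (S (2 * n + 1))))) by ring.
    rewrite R'. transitivity ((2 * INR n + 1) * D n n * Iw (2 * n + 1)); [field; lra | exact IH].
Qed.

Lemma bounds n : (1 <= n)%nat -> PI * INR n * (D n n)^2 <= 1 /\ 2 <= (2 * INR n + 1) * PI * (D n n)^2.
Proof.
  intros Hn. pose proof (D_pos n n). pose proof PI_RGT_0. pose proof (pos_INR n).
  split.
  - destruct n as [|m]. lia.
    pose proof (Iw_dec (2 * m + 1)) as Hd.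
    replace (S (2 * m + 1)) with (2 * S m)%nat in Hd by lia.
    rewrite Iw_even in Hd.
    pose proof (Iw_odd m) as Ho. pose proof (D_diag m) as Dd. pose proof (D_pos m m). pose proof (pos_INR m).
    rewrite plus_INR, INR2 in Ho. simpl INR in Ho. rewrite S_INR in *.
    assert (HI : Iw (2 * m + 1) = / ((2 * INR m + 1) * D m m)).
    { assert (Kz : (2 * INR m + 1) * D m m <> 0) by (apply Rmult_integral_contrapositive; split; lra).
      apply (Rmult_eq_reg_l ((2 * INR m + 1) * D m m)); [|exact Kz]. rewrite Rinv_r by exact Kz. exact Ho. }
    rewrite HI in Hd.
    assert (E2 : (2 * INR m + 1) * D m m = (2 * INR m + 2) * D (S m) (S m)).
    { rewrite Dd. field. lra. }
    rewrite E2 in Hd.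
    set (c := D (S m) (S m)) in *.
    assert (0 < (2 * INR m + 2) * c) by (apply Rmult_lt_0_compat; lra).
    apply (Rmult_le_compat_r ((2 * INR m + 2) * c)) in Hd; [|lra].
    rewrite Rinv_l in Hd by lra.
    replace (PI * (INR m + 1) * c ^ 2) with (PI / 2 * c * ((2 * INR m + 2) * c)) by (simpl; field).
    exact Hd.
  - pose proof (Iw_dec (2 * n)) as Hd.
    replace (S (2 * n)) with (2 * n + 1)%nat in Hd by lia.
    rewrite Iw_even in Hd.
    pose proof (Iw_odd n) as Ho. rewrite plus_INR, INR2 in Ho. simpl INR in Ho.
    assert (0 < (2 * INR n + 1) * D n n) by (apply Rmult_lt_0_compat; lra).
    apply (Rmult_le_compat_l ((2 * INR n + 1) * D n n)) in Hd; [|lra].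
    rewrite Ho in Hd.
    replace ((2 * INR n + 1) * PI * D n n ^ 2) with (2 * ((2 * INR n + 1) * D n n * (PI / 2 * D n n))) by (simpl; field).
    lra.
Qed.

Lemma arch x : exists N : nat, x < INR N.
Proof.
  destruct (Rle_or_lt x 0). exists 1%nat. simpl. lra.
  exists (Z.to_nat (up x)). destruct (archimed x). rewrite INR_IZR_INZ, Z2Nat.id. lra.
  apply le_IZR. lra.
Qed.

Lemma cv_main : Un_cv (fun N => sqrt (INR N) * D N N) (1 / sqrt PI).
Proof.
  intros e He.
  destruct (arch (/ e)) as [M HM].
  exists (S M). intros n Hn.
  assert (Hn1 : (1 <= n)%nat) by lia.
  destruct (bounds n Hn1) as [B1 B2].
  pose proof PI_RGT_0. pose proof (D_pos n n).
  assert (INM : INR M < INR n) by (apply lt_INR; lia).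
  pose proof (pos_INR M).
  assert (Hnpos : 0 < INR n) by lra.
  set (s := sqrt PI). assert (Hs : s * s = PI) by (apply sqrt_sqrt; lra).
  assert (s1 : 1 <= s).
  { unfold s. rewrite <- sqrt_1. apply sqrt_le_1_alt. pose proof PI2_1. lra. }
  set (v := 1 / s).
  set (x := sqrt (INR n) * D n n).
  assert (Hx2 : x * x = INR n * D n n ^ 2).
  { unfold x. replace (sqrt (INR n) * D n n * (sqrt (INR n) * D n n)) with ((sqrt (INR n) * sqrt (INR n)) * D n n ^ 2) by ring.
    rewrite sqrt_sqrt; lra. }
  assert (Hx0 : 0 <= x) by (unfold x; apply Rmult_le_pos; [apply sqrt_pos|lra]).
  assert (Hv : v * v * PI = 1) by (unfold v; rewrite <- Hs; field; lra).
  assert (Hv0 : 0 < v) by (unfold v; apply Rdiv_lt_0_compat; lra).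
  assert (Hv1 : v <= 1) by (unfold v; apply (Rmult_le_reg_r s); [lra|]; unfold Rdiv; rewrite Rmult_assoc, Rinv_l; lra).
  assert (A1 : x * x * PI <= 1) by (rewrite Hx2; nra).
  assert (A2 : 2 * INR n <= (2 * INR n + 1) * (x * x * PI)).
  { rewrite Hx2. replace ((2 * INR n + 1) * (INR n * D n n ^ 2 * PI)) with (INR n * ((2 * INR n + 1) * PI * D n n ^ 2)) by ring. nra. }
  assert (xv : x <= v).
  { destruct (Rle_or_lt x v); auto. exfalso. assert (v * v < x * x) by nra. nra. }
  assert (Key : (v - x) * v * (2 * INR n + 1) <= v * v).
  { assert ((v - x) * v <= v * v - x * x) by nra.
    assert ((v * v - x * x) * (2 * INR n + 1) <= v * v).
    { assert ((2 * INR n + 1) * (x * x) * PI >= 2 * INR n) by lra.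
      assert ((2 * INR n + 1) * (x * x) >= 2 * INR n * (v * v)).
      { apply Rle_ge. apply (Rmult_le_reg_r PI). lra. replace (2 * INR n * (v * v) * PI) with (2 * INR n * (v * v * PI)) by ring. rewrite Hv. lra. }
      nra. }
    nra. }
  assert (Fin : v - x <= v / (2 * INR n + 1)).
  { apply (Rmult_le_reg_r ((2 * INR n + 1) * v)). nra. unfold Rdiv.
    replace (v * / (2 * INR n + 1) * ((2 * INR n + 1) * v)) with (v * v) by (field; lra). nra. }
  unfold Rdist. fold x. rewrite Rabs_left1 by lra.
  assert (/ e < INR n) by lra.
  assert (v / (2 * INR n + 1) < e).
  { apply (Rmult_lt_reg_r (2 * INR n + 1)). lra. unfold Rdiv. rewrite Rmult_assoc, Rinv_l by lra.
    assert (1 < e * INR n). { apply (Rmult_lt_reg_l (/ e)). apply Rinv_0_lt_compat; lra.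
      rewrite <- Rmult_assoc, Rinv_l by lra. lra. }
    nra. }
  lra.
Qed.

Lemma cv_zero : Un_cv (fun N => D N N) 0.
Proof.
  intros e He.
  destruct (arch (/ (e * e))) as [M HM].
  exists (S M). intros n Hn.
  assert (Hn1 : (1 <= n)%nat) by lia.
  destruct (bounds n Hn1) as [B1 B2].
  pose proof PI_RGT_0. pose proof PI2_1. pose proof (D_pos n n).
  assert (INM : INR M < INR n) by (apply lt_INR; lia).
  pose proof (pos_INR M).
  unfold Rdist. rewrite Rminus_0_r, Rabs_right by lra.
  assert (1 < e * e * INR n).
  { apply (Rmult_lt_reg_l (/ (e * e))). apply Rinv_0_lt_compat; nra.
    rewrite <- Rmult_assoc, Rinv_l by nra. lra. }
  assert (INR n * D n n ^ 2 <= 1) by nra.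
  destruct (Rlt_or_le (D n n) e); auto.
  exfalso. assert (e * e <= D n n ^ 2) by (simpl; nra). nra.
Qed.

Theorem lemma1 :
  exists eps : nat -> R,
    (forall (E : nat -> R) (d N : nat) (p : nat -> R) (i j : nat),
       (2 <= d)%nat -> (1 <= N)%nat -> prob_vec d p ->
       (i < d)%nat -> (j < d)%nat -> i <> j ->
       forall a k, (a < d)%nat -> (k < N)%nat ->
         protocol 0 E d N i j (tensor_eta N p) (a * N + k)%nat
         = tensor_eta N (qvec d i j (eps N) p) (a * N + k)%nat)
    /\ Un_cv (fun N => sqrt (INR N) * eps N) (1 / sqrt PI)
    /\ Un_cv eps 0.
Proof.
  exists (fun N => D N N). split; [|split].
  - intros E d N p i j Hd HN _ Hi Hj Hij a k Ha Hk. apply part1; auto.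
  - exact cv_main.
  - exact cv_zero.
Qed.
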